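(* Let $G$ be a finite group of order $n\geq 2$. The number of subsets $S\subseteq G$ such that $\varphi(S)=S$ for some automorphism $\varphi\in\mathrm{Aut}(G)\setminus\{1\}$ is at most $2^{3n/4+(\log_2 n)^2}$. *)

(* Defs.v *)
From HB Require Import structures.
From mathcomp Require Import all_boot all_fingroup.
From Stdlib Require Import Reals.

Set Implicit Arguments.
Unset Strict Implicit.
Unset Printing Implicit Defensive.

Definition aut_fixed_subsets (gT : finGroupType) : {set {set gT}} :=
  [set S : {set gT} |
     [exists phi in Aut [set: gT], (phi != 1%g) && (phi @: S == S)]].

Definition log2R (x : R) : R := (ln x / ln 2)%R.

(* Main.v *)
Require Import Defs.
From HB Require Import structures.
From mathcomp Require Import all_boot all_fingroup.
From Stdlib Require Import Reals Lia.
From mathcomp Require Import zify.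
From Stdlib Require Import Lra.

Set Implicit Arguments. Unset Strict Implicit.
Section S.
Variable gT : finGroupType.
Local Notation n := #|gT|.

Lemma aut_morph (a : {perm gT}) : a \in Aut [set: gT] ->
  forall x y : gT, a (x * y)%g = (a x * a y)%g.
Proof.
move=> /Aut_morphic /morphicP H x y; apply: H; by rewrite inE.
Qed.

Lemma aut1 (a : {perm gT}) : a \in Aut [set: gT] -> a 1%g = 1%g.
Proof.
move=> aA; have := aut_morph aA 1%g 1%g; rewrite mulg1 => E.
by apply: (mulgI (a 1%g)); rewrite mulg1 -E.
Qed.

Lemma eq_group_set (a b : {perm gT}) : a \in Aut [set: gT] -> b \in Aut [set: gT] ->
  group_set [set x | a x == b x].
Proof.
move=> aA bA; apply/group_setP; split; first by rewrite inE !aut1.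
move=> x y; rewrite !inE => /eqP ex /eqP ey.
by rewrite !aut_morph // ex ey.
Qed.

Lemma gen_seq : exists s : seq gT, <<[set x in s]>>%g = [set: gT] /\ expn 2 (size s) <= n.
Proof.
suff H : forall m (s : seq gT), n - #|<<[set x in s]>>%g| <= m ->
  expn 2 (size s) <= #|<<[set x in s]>>%g| ->
  exists t : seq gT, <<[set x in t]>>%g = [set: gT] /\ expn 2 (size t) <= n.
  apply: (H n [::]); first by rewrite leq_subr.
  have -> : [set x in ([::] : seq gT)] = set0 by apply/setP=> x; rewrite !inE.
  by rewrite gen0 cards1.
elim=> [|m IH] s hm hs.
  have E : <<[set x in s]>>%g = [set: gT].
    apply/eqP; rewrite eqEcard subsetT cardsT.
    by move: hm; rewrite leqn0 subn_eq0.
  by exists s; split => //; rewrite -cardsT -E.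
case: (boolP (<<[set x in s]>>%g == [set: gT])) => [/eqP E|NE].
  by exists s; split => //; rewrite -cardsT -E.
have [x _ xN] : exists2 x, x \in [set: gT] & x \notin <<[set x in s]>>%g.
  apply/subsetPn; apply: contra NE => S.
  by rewrite eqEsubset subsetT S.
have sub : <<[set x in s]>>%g \subset <<[set y in x :: s]>>%g.
  by apply: genS; apply/subsetP=> y; rewrite !inE => ->; rewrite orbT.
have xin : x \in <<[set y in x :: s]>>%g by apply: mem_gen; rewrite !inE eqxx.
have pr : <<[set x in s]>>%g \proper <<[set y in x :: s]>>%g.
  by rewrite properEneq sub andbT; apply: contraNneq xN => ->.
have lt := proper_card pr.
have dv := cardSg sub.
have le2 : 2 * #|<<[set x in s]>>%g| <= #|<<[set y in x :: s]>>%g|.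
  case/dvdnP: dv => k hk; move: lt; rewrite hk.
  have p0 : 0 < #|<<[set x in s]>>%g| by rewrite cardG_gt0.
  case: k {hk} => [|[|k]] ; rewrite ?mul0n ?mul1n ?ltnn //.
  by move=> _; rewrite leq_mul2r orbC.
apply: (IH (x :: s)).
  have : #|<<[set y in x :: s]>>%g| <= n by apply: max_card.
  move: hm lt; set a := #|_|; set b := #|_|; move=> hm lt hb.
  lia.
by rewrite expnS; apply: leq_trans le2; rewrite leq_mul2l hs orbT.
Qed.

Lemma aut_card : exists k, expn 2 k <= n /\ #|Aut [set: gT]| <= expn n k.
Proof.
have [s [Gs hs]] := gen_seq.
exists (size s); split => //.
pose f (a : {perm gT}) := map_tuple a (in_tuple s).
rewrite -card_tuple -(card_in_imset (f := f)); first exact: max_card.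
move=> a b aA bA /= /(congr1 val) /= E.
apply/permP => x.
have : x \in <<[set x in s]>>%g by rewrite Gs inE.
suff : <<[set x in s]>>%g \subset Group (eq_group_set aA bA).
  by move=> /subsetP H /H; rewrite inE => /eqP.
rewrite gen_subG; apply/subsetP => y; rewrite inE => ys.
rewrite inE; apply/eqP.
have := congr1 (fun t => nth 1%g t (index y s)) E.
by rewrite !(nth_map 1%g) ?index_mem // nth_index.
Qed.

Lemma fix_card (a : {perm gT}) : a \in Aut [set: gT] -> a != 1%g ->
  #|[set S : {set gT} | a @: S == S]| <= expn 2 ((3 * n) %/ 4).
Proof.
move=> aA a1.
have oA : (1%g : {perm gT}) \in Aut [set: gT] by apply: group1.
pose C := Group (eq_group_set aA oA).
have hC : 2 * #|C| <= n.
  have dv : #|C| %| n by rewrite -cardsT; apply: cardSg; apply: subsetT.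
  have ne : #|C| != n.
    apply: contra a1 => /eqP E.
    have : (C : {set gT}) = [set: gT] by apply/eqP; rewrite eqEcard subsetT cardsT; exact: eq_leq (esym E).
    move=> CT; apply/eqP/permP => x.
    have : x \in C by rewrite CT inE.
    by rewrite inE => /eqP.
  case/dvdnP: dv ne => k hk; rewrite {2}hk.
  have p0 : 0 < #|C| by rewrite cardG_gt0.
  have mc : #|C| <= n by apply: max_card.
  case: k hk => [|[|k]] hk; first by move: hk mc p0; rewrite mul0n; lia.
    by move: hk; rewrite mul1n => ->; rewrite eqxx.
  by move=> _; rewrite leq_mul2r orbC.
pose R := [set x | froot a x == x].
have inj : injective a := @perm_inj _ a.
have hR : 4 * #|R| <= 3 * n.
  pose D := ~: (C : {set gT}).
  have h1 : #|C| + #|D| = n := cardsC C.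
  have h2 := cardsID R D.
  have h3 := cardsID C R.
  have h4 : #|D :&: R| <= #|D :\: R|.
    rewrite -(card_in_imset (f := a) (D := mem (D :&: R))); last by move=> x y _ _; apply: inj.
    apply: subset_leq_card; apply/subsetP => y /imsetP [x xDR ->].
    move: xDR; rewrite !inE => /andP [xD /eqP xr].
    have fr : froot a (a x) = froot a x.
      apply/eqP; rewrite root_connect; last exact: fconnect_sym.
      by rewrite fconnect_sym //; apply: fconnect1.
    rewrite fr xr; apply/andP; split.
      by rewrite eq_sym; move: xD; rewrite perm1.
    rewrite perm1; apply: contra xD; rewrite perm1 => /eqP E; apply/eqP; exact: inj E.
  have h5 : R :\: C \subset D :&: R.
    by apply/subsetP => x; rewrite !inE => /andP [-> ->].
  have h6 := subset_leq_card h5.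
  have h7 : #|R :&: C| <= #|C| by apply: subset_leq_card; apply: subsetIr.
  have h10 : #|R :&: C| + #|R :\: C| = #|R| by apply: cardsID.
  lia.
have key : forall S : {set gT}, a @: S == S -> forall x, (x \in S) = (froot a x \in S :&: R).
  move=> S /eqP inv x.
  have cl : closed (frel a) (mem S).
    move=> u v /eqP <-; by rewrite -{2}inv mem_imset.
  by rewrite inE (closed_connect cl (connect_root _ x)) inE (root_root (fconnect_sym inj)) eqxx andbT.
apply: (@leq_trans (expn 2 #|R|)); last first.
  apply: leq_pexp2l => //; rewrite leq_divRL //; lia.
rewrite -card_powerset -(card_in_imset (f := fun S => S :&: R)).
  apply: subset_leq_card; apply/subsetP => T /imsetP [S _ ->].
  by rewrite powersetE subsetIr.
move=> S S'; rewrite !inE => iS iS' E; apply/setP => x.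
by rewrite (key _ iS) (key _ iS') E.
Qed.

Lemma card_bigcup_leq (I T : finType) (P : pred I) (F : I -> {set T}) :
  #|\bigcup_(i | P i) F i| <= \sum_(i | P i) #|F i|.
Proof.
apply: (big_ind2 (fun (X : {set T}) m => #|X| <= m)).
- by rewrite cards0.
- move=> X1 m1 X2 m2 h1 h2; apply: leq_trans (leq_card_setU X1 X2) _.
  exact: leq_add.
- by [].
Qed.

Lemma main_nat : exists k, expn 2 k <= n /\
  #|aut_fixed_subsets gT| <= expn n k * expn 2 ((3 * n) %/ 4).
Proof.
have [k [hk hA]] := aut_card.
exists k; split => //.
pose r := (3 * n) %/ 4.
have sub : aut_fixed_subsets gT \subset
   \bigcup_(a | (a \in Aut [set: gT]) && (a != 1%g)) [set S : {set gT} | a @: S == S].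
  apply/subsetP => S; rewrite inE => /existsP [a /andP [aA /andP [a1 e]]].
  by apply/bigcupP; exists a; rewrite ?aA ?a1 // inE.
apply: leq_trans (subset_leq_card sub) _.
apply: leq_trans (card_bigcup_leq _ _) _.
apply: (@leq_trans (\sum_(a | (a \in Aut [set: gT]) && (a != 1%g)) expn 2 r)).
  by apply: leq_sum => a /andP [aA a1]; apply: fix_card.
rewrite sum_nat_const leq_mul2r; apply/orP; right.
apply: leq_trans hA; apply: subset_leq_card; apply/subsetP => a.
by rewrite unfold_in => /andP [].
Qed.
End S.

Lemma INR_expn (a b : nat) : INR (expn a b) = (INR a ^ b)%R.
Proof.
elim: b => [|b IH]; first by rewrite expn0.
by rewrite expnS -multE mult_INR IH.
Qed.

Lemma INR_leq (a b : nat) : a <= b -> (INR a <= INR b)%R.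
Proof. by move=> /leP; apply: le_INR. Qed.

Lemma exp_le (x y : R) : (x <= y)%R -> (exp x <= exp y)%R.
Proof. case/Rle_lt_or_eq_dec => h; [left; exact: exp_increasing | right; by rewrite h]. Qed.

Lemma ln_le' (x y : R) : (0 < x)%R -> (x <= y)%R -> (ln x <= ln y)%R.
Proof. move=> hx; case/Rle_lt_or_eq_dec => h; [left; exact: ln_increasing | right; by rewrite h]. Qed.

Unset Implicit Arguments.
Unset Strict Implicit.
Theorem lemma5p2 (gT : finGroupType) (hn : (2 <= #|gT|)%N) :
  (INR #|aut_fixed_subsets gT|
     <= Rpower 2 (3 * INR #|gT| / 4 + (log2R (INR #|gT|)) ^ 2))%R.
Proof.
have [k [hk hN]] := main_nat gT.
set n := #|gT| in hn hk hN *.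
set r := (3 * n) %/ 4 in hN.
have hr : 4 * r <= 3 * n by rewrite mulnC; apply: leq_trunc_div.
have Rn2 : (2 <= INR n)%R by apply: (INR_leq hn).
have ln2 : (0 < ln 2)%R by rewrite -ln_1; apply: ln_increasing; lra.
apply: Rle_trans (INR_leq hN) _.
have I2 : INR 2 = 2%R by simpl; ring.
rewrite -multE mult_INR !INR_expn I2 Rpower_plus Rmult_comm.
apply: Rmult_le_compat.
- apply: pow_le; lra.
- apply: pow_le; lra.
- rewrite -Rpower_pow; last lra.
  apply: Rle_Rpower; first lra.
  have := INR_leq hr; rewrite -!multE !mult_INR /=. lra.
- rewrite -Rpower_pow; last lra.
  rewrite /Rpower /log2R; apply: exp_le.
  have hk' : (INR k * ln 2 <= ln (INR n))%R.
    rewrite -ln_pow; last lra.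
    apply: ln_le'; first (apply: pow_lt; lra).
    by rewrite -I2 -INR_expn; apply: INR_leq.
  set u := ln (INR n) in hk' *.
  have ht : u = (u / ln 2 * ln 2)%R by field; lra.
  set t := (u / ln 2)%R in ht *.
  rewrite ht in hk' *.
  have ktl : (INR k <= t)%R by apply: (Rmult_le_reg_r (ln 2)).
  have k0 : (0 <= INR k)%R by apply: pos_INR.
  nra.
Qed.
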